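(* There exist an environment $E$ and a total preorder $\succeq$ on $\Pi^E$ such that $\succeq\in\mathrm{Ord}_{\mathrm{RM}}(E)\cap\mathrm{Ord}_{\mathrm{ONMR}}(E)\cap\mathrm{Ord}_{\mathrm{LTL}}(E)$ but $\succeq\notin\mathrm{Ord}_{\mathrm{MR}}(E)\cup\mathrm{Ord}_{\mathrm{RRL}}(E)$.
   Context: An environment is a tuple $E=(\mathcal S,\mathcal A,\mathcal T,\mathcal I)$ where $\mathcal S,\mathcal A$ are finite nonempty sets, $\mathcal T:\mathcal S\times\mathcal A\to\Delta(\mathcal S)$ and $\mathcal I\in\Delta(\mathcal S)$. A policy is a map $\pi:\mathcal S\to\Delta(\mathcal A)$ (stationary, possibly stochastic); $\Pi^E$ denotes the set of all policies. A trajectory $\xi=(s_0,a_0,s_1,a_1,\dots)\in\Xi:=\mathcal S\times(\mathcal A\times\mathcal S)^\omega$ is generated under $\pi$ by $s_0\sim\mathcal I$, $a_t\sim\pi(s_t)$, $s_{t+1}\sim\mathcal T(s_t,a_t)$; $\mathbb E^\pi_\xi$ denotes expectation under this distribution. An objective-specification formalism $X$ assigns to each environment $E$ a set of objective specifications, each inducing a total preorder $\succeq$ on $\Pi^E$; $\mathrm{Ord}_X(E)$ is the set of total preorders so induced. A specification defining a scalar $J:\Pi^E\to\mathbb R$ induces $\pi_1\succeq\pi_2\iff J(\pi_1)\ge J(\pi_2)$. MR: specification $(\mathcal R,\gamma)$, $\mathcal R:\mathcal S\times\mathcal A\times\mathcal S\to\mathbb R$, $\gamma\in[0,1)$, $J(\pi)=\mathbb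 E^\pi_\xi[\sum_{t=0}^\infty\gamma^t\mathcal R(s_t,a_t,s_{t+1})]$. RRL: specification $(\mathcal R,\alpha,F,\gamma)$ with $\mathcal R:\mathcal S\times\mathcal A\times\mathcal S\to\mathbb R$, $\alpha\in\mathbb R$, $F:\Delta(\mathcal A)\to\mathbb R$, $\gamma\in[0,1)$; $J(\pi)=\mathbb E^\pi_\xi[\sum_{t=0}^\infty\gamma^t(\mathcal R(s_t,a_t,s_{t+1})-\alpha F(\pi(s_t)))]$. ONMR: specification $(\mathcal R,f,\gamma)$ with $\mathcal R:\mathcal S\times\mathcal A\times\mathcal S\to\mathbb R$, $f:\mathbb R\to\mathbb R$, $\gamma\in[0,1)$; $J(\pi)=f\big(\mathbb E^\pi_\xi[\sum_{t=0}^\infty\gamma^t\mathcal R(s_t,a_t,s_{t+1})]\big)$. RM (reward machines): specification $(U,u_0,\delta_U,\delta_{\mathcal R},\gamma)$ with $U$ a finite set, $u_0\in U$, $\delta_U:U\times\mathcal S\times\mathcal A\times\mathcal S\to U$, $\delta_{\mathcal R}:U\times U\to(\mathcal S\times\mathcal A\times\mathcal S\to\mathbb R)$, $\gamma\in[0,1)$; along a trajectory $u_{t+1}=\delta_U(u_t,s_t,a_t,s_{t+1})$ and $J(\pi)=\mathbb E^\pi_\xi[\sum_{t=0}^\infty\gamma^t\,\delta_{\mathcal R}(u_t,u_{t+1})(s_t,a_t,s_{t+1})]$. LTL: specification $(\varphi)$ with $\varphi$ a linear temporal logic formula whose atomic propositions are the transitions $(s,a,s')\in\mathcal S\times\mathcal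 A\times\mathcal S$, built with $\neg,\lor,\land,\to$ and the temporal operators $\bigcirc$ (next), $\square$ (always), $\lozenge$ (eventually), $\mathcal U$ (until). Semantics on a trajectory $\xi$ at time $t$: an atomic proposition $(s,a,s')$ holds iff $(s_t,a_t,s_{t+1})=(s,a,s')$; $\bigcirc\psi$ holds iff $\psi$ holds at $t+1$; $\square\psi$ iff $\psi$ holds at every $t'\ge t$; $\lozenge\psi$ iff $\psi$ holds at some $t'\ge t$; $\psi\,\mathcal U\,\chi$ iff there is $t'\ge t$ with $\chi$ holding at $t'$ and $\psi$ holding at every $t''$ with $t\le t''<t'$; Boolean connectives as usual. $\varphi(\xi)=1$ if $\varphi$ holds at time $0$ and $0$ otherwise; $J(\pi)=\mathbb E^\pi_\xi[\varphi(\xi)]$. *)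

(* Defs.v *)
From HB Require Import structures.
From mathcomp Require Import all_boot all_order all_algebra.
From mathcomp Require Import all_classical all_reals all_analysis.
From mathcomp Require Import Rstruct Rstruct_topology.

Set Implicit Arguments.
Unset Strict Implicit.
Unset Printing Implicit Defensive.

Import Order.TTheory GRing.Theory Num.Theory.
Local Open Scope classical_set_scope.
Local Open Scope ring_scope.

Notation R := Rdefinitions.R.

Definition is_dist (T : finType) (d : {ffun T -> R}) : Prop :=
  (forall x, 0 <= d x) /\ \sum_(x : T) d x = 1.

Record dist (T : finType) := Dist {
  dval :> {ffun T -> R};
  dval_dist : is_dist dval }.

Record env := Env {
  st : finType;
  act : finType;
  st_nonempty : (0 < #|st|)%N;
  act_nonempty : (0 < #|act|)%N;
  trans : st -> act -> dist st;
  init : dist st }.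

Definition policy (E : env) := st E -> dist (act E).

Section Env.
Variable E : env.
Local Notation S := (st E).
Local Notation A := (act E).
Local Notation T := (@trans E).
Local Notation I := (@init E).

(** A finite trajectory prefix s_0 a_0 s_1 a_1 ... s_n a_n (n transitions). *)
Definition path (n : nat) : finType :=
  ({ffun 'I_n.+1 -> S} * {ffun 'I_n.+1 -> A})%type.

Definition pst n (p : path n) (k : nat) : S := p.1 (inord k).
Definition pact n (p : path n) (k : nat) : A := p.2 (inord k).

Definition path_prob (pi : policy E) n (p : path n) : R :=
  I (pst p 0) *
  (\prod_(i < n.+1) pi (pst p i) (pact p i)) *
  (\prod_(i < n) T (pst p i) (pact p i) (pst p i.+1)).

(** Expected discounted sum E[ sum_t gamma^t r_t ] where the reward at time t
    is r t p s' with p = s_0 a_0 ... s_t a_t the prefix and s' = s_{t+1}.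
    (E[sum_t gamma^t r_t] = sum_t gamma^t E[r_t] for bounded rewards.) *)
Definition exp_disc (pi : policy E) (gamma : R)
    (r : forall t : nat, path t -> S -> R) : R :=
  limn (fun N => \sum_(0 <= t < N)
    gamma ^+ t * \sum_(p : path t) path_prob pi p *
       \sum_(s' : S) T (pst p t) (pact p t) s' * r t p s').

Definition J_MR (Rw : S -> A -> S -> R) (gamma : R) (pi : policy E) : R :=
  exp_disc pi gamma (fun t p s' => Rw (pst p t) (pact p t) s').

Definition J_RRL (Rw : S -> A -> S -> R) (alpha : R) (F : dist A -> R)
    (gamma : R) (pi : policy E) : R :=
  exp_disc pi gamma
    (fun t p s' => Rw (pst p t) (pact p t) s' - alpha * F (pi (pst p t))).

Definition J_ONMR (Rw : S -> A -> S -> R) (f : R -> R) (gamma : R)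
    (pi : policy E) : R := f (J_MR Rw gamma pi).

Fixpoint rm_state (U : finType) (u0 : U) (dU : U -> S -> A -> S -> U)
    n (p : path n) (k : nat) : U :=
  match k with
  | 0 => u0
  | k'.+1 => dU (rm_state u0 dU p k') (pst p k') (pact p k') (pst p k)
  end.

Definition J_RM (U : finType) (u0 : U) (dU : U -> S -> A -> S -> U)
    (dR : U -> U -> (S -> A -> S -> R)) (gamma : R) (pi : policy E) : R :=
  exp_disc pi gamma (fun t p s' =>
    let ut := rm_state u0 dU p t in
    dR ut (dU ut (pst p t) (pact p t) s') (pst p t) (pact p t) s').

Record traj := Traj { tst : nat -> S; tact : nat -> A }.

Inductive ltl :=
  | LAtom of S & A & S
  | LNot of ltl
  | LOr of ltl & ltl
  | LAnd of ltl & ltl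
  | LImp of ltl & ltl
  | LNext of ltl
  | LAlways of ltl
  | LEventually of ltl
  | LUntil of ltl & ltl.

Fixpoint ltl_holds (phi : ltl) (xi : traj) (t : nat) : Prop :=
  match phi with
  | LAtom s a s' => tst xi t = s /\ tact xi t = a /\ tst xi t.+1 = s'
  | LNot psi => ~ ltl_holds psi xi t
  | LOr psi chi => ltl_holds psi xi t \/ ltl_holds chi xi t
  | LAnd psi chi => ltl_holds psi xi t /\ ltl_holds chi xi t
  | LImp psi chi => ltl_holds psi xi t -> ltl_holds chi xi t
  | LNext psi => ltl_holds psi xi t.+1
  | LAlways psi => forall t', (t <= t')%N -> ltl_holds psi xi t'
  | LEventually psi => exists t', (t <= t')%N /\ ltl_holds psi xi t'
  | LUntil psi chi => exists t', (t <= t')%N /\ ltl_holds chi xi t' /\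
      forall t'', (t <= t'')%N -> (t'' < t')%N -> ltl_holds psi xi t''
  end.

Definition cyl n (p : path n) : set traj :=
  [set xi | forall k, (k <= n)%N -> tst xi k = pst p k /\ tact xi k = pact p k].

Definition ocyl (c : option {n : nat & path n}) : set traj :=
  if c is Some (existT n p) then cyl p else set0.

Definition ocyl_prob (pi : policy E) (c : option {n : nat & path n}) : R :=
  if c is Some (existT n p) then path_prob pi p else 0.

(** The trajectory distribution of pi, evaluated on a set B of trajectories
    via the Caratheodory outer measure generated by the cylinder
    probabilities; on measurable sets (in particular on LTL events) this is
    the probability of B under the trajectory distribution. *)
Definition traj_prob (pi : policy E) (B : set traj) : \bar R :=
  ereal_inf [set (\sum_(k <oo) (ocyl_prob pi (c k))%:E)%E
            | c in [set c : nat -> option {n : nat & path n} |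
                    B `<=` \bigcup_k ocyl (c k)]].

Definition J_LTL (phi : ltl) (pi : policy E) : R :=
  fine (traj_prob pi [set xi | ltl_holds phi xi 0]).

Definition induced (J : policy E -> R) (rel : policy E -> policy E -> Prop) : Prop :=
  forall p1 p2, rel p1 p2 <-> J p2 <= J p1.

Definition total_preorder (rel : policy E -> policy E -> Prop) : Prop :=
  (forall p, rel p p) /\
  (forall p1 p2 p3, rel p1 p2 -> rel p2 p3 -> rel p1 p3) /\
  (forall p1 p2, rel p1 p2 \/ rel p2 p1).

Definition discount (gamma : R) : Prop := 0 <= gamma < 1.

Definition in_Ord_MR rel : Prop :=
  exists (Rw : S -> A -> S -> R) (gamma : R),
    discount gamma /\ induced (J_MR Rw gamma) rel.

Definition in_Ord_RRL rel : Prop :=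
  exists (Rw : S -> A -> S -> R) (alpha : R) (F : dist A -> R) (gamma : R),
    discount gamma /\ induced (J_RRL Rw alpha F gamma) rel.

Definition in_Ord_ONMR rel : Prop :=
  exists (Rw : S -> A -> S -> R) (f : R -> R) (gamma : R),
    discount gamma /\ induced (J_ONMR Rw f gamma) rel.

Definition in_Ord_RM rel : Prop :=
  exists (U : finType) (u0 : U) (dU : U -> S -> A -> S -> U)
         (dR : U -> U -> (S -> A -> S -> R)) (gamma : R),
    discount gamma /\ induced (J_RM u0 dU dR gamma) rel.

Definition in_Ord_LTL rel : Prop :=
  exists phi : ltl, induced (J_LTL phi) rel.

End Env.

(* Main.v *)
Require Import Defs.
From HB Require Import structures.
From mathcomp Require Import all_boot all_order all_algebra.
From mathcomp Require Import all_classical all_reals all_analysis.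
From mathcomp Require Import Rstruct Rstruct_topology.
From mathcomp Require Import lra ring.

Set Implicit Arguments.
Unset Strict Implicit.
Unset Printing Implicit Defensive.
Import Order.TTheory GRing.Theory Num.Theory.
Import numFieldNormedType.Exports.
Local Open Scope classical_set_scope.
Local Open Scope ring_scope.
Definition dirac_ffun (T : finType) (x : T) : {ffun T -> R} := [ffun y => (y == x)%:R].
Lemma dirac_is_dist (T : finType) (x : T) : is_dist (dirac_ffun x).
Proof.
split=> [y|]; first by rewrite ffunE ler0n.
rewrite (bigD1 x) //= ffunE eqxx big1 ?addr0 // => y /negbTE yx.
by rewrite ffunE yx.
Qed.
Definition dirac (T : finType) (x : T) : dist T := Dist (dirac_is_dist x).
Lemma diracE (T : finType) (x y : T) : dirac x y = (y == x)%:R.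
Proof. by rewrite /= ffunE. Qed.

Lemma card_bool_gt0 : (0 < #|{: bool}|)%N. Proof. by rewrite card_bool. Qed.
Definition E0 : env :=
  @Env bool bool card_bool_gt0 card_bool_gt0 (fun _ _ => dirac true) (dirac false).

Definition sig (i : nat) : bool := (i != 0)%N.

Lemma dist_sum (d : dist bool) : d true + d false = 1.
Proof. by have [_ H] := dval_dist d; rewrite -H big_bool. Qed.
Lemma dist_ge0 (T : finType) (d : dist T) x : 0 <= d x.
Proof. by have [H _] := dval_dist d. Qed.

Lemma pst_ord (E : env) n (p : Defs.path E n) (i : 'I_n.+1) : pst p i = p.1 i.
Proof. by rewrite /pst inord_val. Qed.
Lemma pact_ord (E : env) n (p : Defs.path E n) (i : 'I_n.+1) : pact p i = p.2 i.
Proof. by rewrite /pact inord_val. Qed.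

Lemma pp_E0 (pi : policy E0) n (p : Defs.path E0 n) :
  path_prob pi p = \prod_(i < n.+1) (((p.1 i : bool) == sig i)%:R * pi (p.1 i) (p.2 i)).
Proof.
rewrite /path_prob big_split /= mulrAC; congr (_ * _); last first.
  by apply: eq_bigr => i _; rewrite pst_ord pact_ord.
rewrite big_ord_recl /= ffunE; congr (_ * _).
  by rewrite /pst; congr ((p.1 _ == _)%:R); apply/val_inj; rewrite /= inordK.
apply: eq_bigr => i _; rewrite ffunE /pst /sig /=.
by congr ((p.1 _ == _)%:R); apply/val_inj; rewrite /= inordK // ltnS.
Qed.

Lemma master (pi : policy E0) n (h : nat -> bool -> bool -> R) :
  \sum_(p : Defs.path E0 n) path_prob pi p * \prod_(i < n.+1) h i (p.1 i) (p.2 i)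
  = \prod_(i < n.+1) \sum_(a : bool) pi (sig i) a * h i (sig i) a.
Proof.
under eq_bigr do rewrite pp_E0 -big_split /=.
rewrite -(pair_bigA _ (fun (fs : {ffun 'I_n.+1 -> bool}) (fa : {ffun 'I_n.+1 -> bool}) => \prod_(i < n.+1) ((fs i == sig i)%:R * pi (fs i) (fa i) * h i (fs i) (fa i)))) /=.
under eq_bigr => fs _ do rewrite -(bigA_distr_bigA (fun (i : 'I_n.+1) (a : bool) => (fs i == sig i)%:R * pi (fs i) a * h i (fs i) a)).
rewrite -(bigA_distr_bigA (fun (i : 'I_n.+1) (s : bool) => \sum_(a : bool) (s == sig i)%:R * pi s a * h i s a)).
apply: eq_bigr => i _.
rewrite big_bool /=; rewrite -big_split /=; case: (sig i) => /=;
  by apply: eq_bigr => a _; rewrite ?mul1r !mul0r ?addr0 ?add0r.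
Qed.

Lemma single_time (pi : policy E0) t (g : bool -> bool -> R) :
  \sum_(p : Defs.path E0 t) path_prob pi p * g (pst p t) (pact p t)
  = \sum_(a : bool) pi (sig t) a * g (sig t) a.
Proof.
pose h i s a := if (i == t)%N then g s a else 1.
have E (p : Defs.path E0 t) : g (pst p t) (pact p t) = \prod_(i < t.+1) h i (p.1 i) (p.2 i).
  rewrite (bigD1 ord_max) //= big1 ?mulr1; last first.
    by move=> i /negbTE ne; rewrite /h -val_eqE /= in ne *; rewrite ne.
  by rewrite /h eqxx /pst /pact; congr (g (p.1 _) (p.2 _)); apply/val_inj; rewrite /= inordK.
under eq_bigr do rewrite E.
rewrite master (bigD1 ord_max) //= [X in _ * X]big1 ?mulr1.
  by apply: eq_bigr => a _; rewrite /h eqxx.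
move=> i /negbTE ne; rewrite /h -val_eqE /= in ne *; rewrite ne.
under eq_bigr do rewrite mulr1.
by have [_ ->] := dval_dist (pi (sig i)).
Qed.

Lemma exp_disc_E0 (pi : policy E0) gamma (g : nat -> bool -> bool -> bool -> R) :
  exp_disc pi gamma (fun t p s' => g t (pst p t) (pact p t) s') =
  limn (fun N => \sum_(0 <= t < N) gamma ^+ t * \sum_(a : bool) pi (sig t) a * g t (sig t) a true).
Proof.
rewrite /exp_disc; congr (limn _); apply/funext => N; apply: eq_bigr => t _.
congr (_ * _).
have K s a : \sum_(s' : bool) dirac true s' * g t s a s' = g t s a true.
  by rewrite big_bool !diracE /= mul1r mul0r addr0.
under [RHS]eq_bigr do rewrite -K.
by rewrite -(single_time pi t (fun s a => \sum_(s' : bool) dirac true s' * g t s a s')).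
Qed.

Lemma lim_two (K : realType) (x y gamma : K) : 0 <= gamma < 1 ->
  limn (fun N => \sum_(0 <= t < N) gamma ^+ t * (if (t == 0)%N then x else y))
  = x + y * ((1 - gamma)^-1 - 1).
Proof.
move=> /andP[g0 g1].
have H : series (geometric 1 gamma) @ \oo --> (1 * (1 - gamma)^-1).
  by apply: cvg_geometric_series; rewrite ger0_norm.
apply: cvg_lim => //.
have -> : x + y * ((1 - gamma)^-1 - 1) = (x - y) + y * (1 * (1 - gamma)^-1).
  by rewrite mul1r; ring.
have C : (fun N => (x - y) + y * series (geometric 1 gamma) N) @ \oo --> (x - y) + y * (1 * (1 - gamma)^-1).
  by apply: cvgD; [exact: cvg_cst | exact: cvgMl_tmp].
apply: (@cvg_trans _ ((fun N => (x - y) + y * series (geometric 1 gamma) N) @ \oo)) => //.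
apply: near_eq_cvg; near=> N.
have N0 : (0 < N)%N by near: N; exists 1%N => // k /=; rewrite leq_eqVlt orbC => ->.
rewrite -(prednK N0).
rewrite /series /= big_nat_recl // [in RHS]big_nat_recl //= expr0 mul1r.
rewrite (_ : \sum_(0 <= i < N.-1) gamma ^+ i.+1 * y = y * \sum_(0 <= i < N.-1) 1 * gamma ^+ i.+1); last first.
  by rewrite mulr_sumr; apply: eq_bigr => i _; rewrite mul1r mulrC.
ring.
Unshelve. all: by end_near.
Qed.

Definition Jstar (pi : policy E0) : R := pi true true * pi true false.
Definition rel0 (p1 p2 : policy E0) : Prop := Jstar p2 <= Jstar p1.

Lemma rel0_tp : total_preorder rel0.
Proof.
split; first by move=> p; rewrite /rel0.
split; first by move=> p1 p2 p3; rewrite /rel0 => h1 h2; exact: le_trans h2 h1.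
by move=> p1 p2; rewrite /rel0; case: (lerP (Jstar p2) (Jstar p1)) => h; [left|right; exact: ltW].
Qed.

Lemma J_RRL_E0 Rw alpha F gamma (pi : policy E0) : 0 <= gamma < 1 ->
  J_RRL Rw alpha F gamma pi =
  (\sum_(a : bool) pi false a * (Rw false a true - alpha * F (pi false))) +
  (\sum_(a : bool) pi true a * (Rw true a true - alpha * F (pi true))) * ((1 - gamma)^-1 - 1).
Proof.
move=> hg.
rewrite /J_RRL (exp_disc_E0 pi gamma (fun t s a s' => Rw s a s' - alpha * F (pi s))).
rewrite -(lim_two _ _ hg); congr (limn _); apply/funext => N; apply: eq_bigr => t _.
by case: t.
Qed.

Lemma J_MR_RRL Rw gamma (pi : policy E0) :
  J_MR Rw gamma pi = J_RRL Rw 0 (fun _ => 0) gamma pi.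
Proof.
rewrite /J_MR /J_RRL; congr (exp_disc _ _ _).
by apply: functional_extensionality_dep => t; apply/funext => p; apply/funext => s'; rewrite mul0r subr0.
Qed.

Definition Rw_on (s : st E0) (a : act E0) (s2 : st E0) : R := (s && a)%:R.
Definition f_on (x : R) : R := x * (1 - x).

Lemma half_ok : (0 : R) <= (2^-1 : R) < 1.
Proof. apply/andP; split; lra. Qed.

Lemma K_half : (1 - (2^-1 : R))^-1 - 1 = 1.
Proof.
have -> : 1 - (2^-1 : R) = 2^-1 by field.
by rewrite invrK; lra.
Qed.

Lemma pol_sum (pi : policy E0) s : pi s true + pi s false = 1.
Proof. by have [_ <-] := dval_dist (pi s); rewrite big_bool. Qed.

Lemma J_ONMR_E0 (pi : policy E0) : J_ONMR Rw_on f_on 2^-1 pi = Jstar pi.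
Proof.
rewrite /J_ONMR J_MR_RRL J_RRL_E0 ?half_ok // K_half !big_bool /Rw_on /= /Jstar /f_on.
have h := pol_sum pi true.
have -> : pi true false = 1 - pi true true by lra.
ring.
Qed.

Definition half_ffun : {ffun bool -> R} := [ffun _ => 2^-1].
Lemma half_is_dist : is_dist half_ffun.
Proof.
split=> [b|]; first by rewrite ffunE invr_ge0 ler0n.
rewrite big_bool !ffunE /=.
have -> : (2^-1 + 2^-1 : R) = 1 by field.
by [].
Qed.
Definition Bh : dist bool := Dist half_is_dist.
Definition B0 : dist bool := dirac false.
Definition B1 : dist bool := dirac true.
Definition pol (d0 d1 : dist bool) : policy E0 := fun s => if s then d1 else d0.

Lemma not_RRL : ~ in_Ord_RRL rel0.
Proof.
case=> Rw [alpha [F [gamma [hg hind]]]].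
set J := J_RRL Rw alpha F gamma.
have eqJ p1 p2 : Jstar p1 = Jstar p2 -> J p1 = J p2.
  move=> e; apply/eqP; rewrite eq_le.
  by apply/andP; split; [apply: (proj1 (hind p2 p1)) | apply: (proj1 (hind p1 p2))]; rewrite /rel0 e.
have ltJ p1 p2 : Jstar p2 < Jstar p1 -> J p2 < J p1.
  move=> lt; rewrite ltNge; apply/negP => h.
  by have := (hind p2 p1).2 h; rewrite /rel0 => h'; move: lt; rewrite ltNge h'.
have Jf d0 d1 : J (pol d0 d1) =
  (\sum_(a : bool) d0 a * (Rw false a true - alpha * F d0)) +
  (\sum_(a : bool) d1 a * (Rw true a true - alpha * F d1)) * ((1 - gamma)^-1 - 1).
  by rewrite /J J_RRL_E0.
have JsB d0 : Jstar (pol d0 B0) = 0 by rewrite /Jstar /= !ffunE /= mul0r.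
have JsB1 d0 : Jstar (pol d0 B1) = 0 by rewrite /Jstar /= !ffunE /= mulr0.
have JsBh d0 : Jstar (pol d0 Bh) = 2^-1 * 2^-1 by rewrite /Jstar /= !ffunE.
have ha := eqJ (pol B1 B0) (pol B0 B0) (etrans (JsB _) (esym (JsB _))).
have hb := eqJ (pol Bh B0) (pol B0 B0) (etrans (JsB _) (esym (JsB _))).
have hc := eqJ (pol B0 B0) (pol B0 B1) (etrans (JsB _) (esym (JsB1 _))).
have hd : J (pol B0 B0) < J (pol B0 Bh).
  by apply: ltJ; rewrite JsB JsBh mulr_gt0 // invr_gt0 ltr0n.
move: ha hb hc hd; rewrite !Jf !big_bool /= !ffunE /=.
set K := (1 - gamma)^-1 - 1.
set a0 := alpha * F B0; set a1 := alpha * F B1; set ah := alpha * F Bh.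
set r1 := Rw false true true; set r2 := Rw false false true.
set r3 := Rw true true true; set r4 := Rw true false true.
move=> ha hb hc hd.
have hy : (2^-1 * (r3 - ah) + 2^-1 * (r4 - ah)) = ((1 * (r3 - a1) + 0 * (r4 - a1)) + (0 * (r3 - a0) + 1 * (r4 - a0))) / 2.
  lra.
have : (2^-1 * (r3 - ah) + 2^-1 * (r4 - ah)) * K = ((1 * (r3 - a1) + 0 * (r4 - a1)) * K + (0 * (r3 - a0) + 1 * (r4 - a0)) * K) / 2.
  by rewrite hy; field.
lra.
Qed.

Lemma not_MR : ~ in_Ord_MR rel0.
Proof.
case=> Rw [gamma [hg hind]]; apply: not_RRL.
exists Rw, 0, (fun _ => 0), gamma; split => // p1 p2.
by rewrite -!J_MR_RRL.
Qed.

Definition U0 : finType := (bool * bool)%type.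
Definition u0 : U0 := (false, false).
Definition dU (u : U0) (s : st E0) (a : act E0) (s2 : st E0) : U0 :=
  if u.1 then (true, false) else if u.2 then (true, a : bool) else (false, true).
Definition dR (u u' : U0) (s : st E0) (a : act E0) (s2 : st E0) : R :=
  if u == (true, true) then (~~ (a : bool))%:R else 0.

Lemma rm2 n (p : Defs.path E0 n) : rm_state u0 dU p 2 = (true, pact p 1 : bool).
Proof. by []. Qed.

Lemma rm_big n (p : Defs.path E0 n) t : rm_state u0 dU p t.+3 = (true, false).
Proof.
have step k : rm_state u0 dU p k.+1 = dU (rm_state u0 dU p k) (pst p k) (pact p k) (pst p k.+1) by [].
elim: t => [|t IH]; first by rewrite step rm2.
by rewrite step IH.
Qed.

Lemma rm_small n (p : Defs.path E0 n) t : t != 2%N -> rm_state u0 dU p t != (true, true).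
Proof. by case: t => [|[|[|t]]] // _; rewrite ?rm_big. Qed.

Lemma lim_evt (K : realType) (u : nat -> K) (l : K) (N0 : nat) :
  (forall N, (N0 <= N)%N -> u N = l) -> limn u = l.
Proof.
move=> h; apply: (@lim_near_cst K (@Rhausdorff K)); near=> N; apply: h.
by near: N; exists N0.
Unshelve. all: by end_near.
Qed.

Lemma sum3 (F : nat -> R) : \sum_(0 <= i < 3) F i = F 0%N + F 1%N + F 2%N.
Proof. by rewrite unlock /= addr0 addrA. Qed.

Lemma J_RM_E0 (pi : policy E0) :
  J_RM u0 dU dR (2^-1) pi = 2^-1 ^+ 2 * Jstar pi.
Proof.
rewrite /J_RM /exp_disc; apply: (@lim_evt R _ _ 3) => N N3.
rewrite (@big_cat_nat _ _ _ 3 0 N _ _ (leq0n 3) N3) /= [X in _ + X]big1_seq ?addr0; last first.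
  move=> t /andP[_]; rewrite mem_index_iota => /andP[t3 _].
  rewrite big1 ?mulr0 // => p _.
  rewrite big1 ?mulr0 // => s' _.
  by rewrite /dR (negbTE (rm_small _ _)) ?mulr0 //; rewrite neq_ltn t3 orbT.
rewrite sum3.
rewrite [X in _ * X + _ + _]big1 ?mulr0 ?add0r; last first.
  by move=> p _; rewrite big1 ?mulr0 // => s' _; rewrite /dR /= mulr0.
rewrite [X in _ * X + _]big1 ?mulr0 ?add0r; last first.
  by move=> p _; rewrite big1 ?mulr0 // => s' _; rewrite /dR /= mulr0.
congr (_ * _).
pose h (i : nat) (s a : bool) : R := if (i == 1)%N then (a : bool)%:R else if (i == 2)%N then (~~ a)%:R else 1.
transitivity (\sum_(p : Defs.path E0 2) path_prob pi p * \prod_(i < 3) h i (p.1 i) (p.2 i)).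
  apply: eq_bigr => p _; congr (_ * _).
  rewrite big_bool /= !diracE /= mul0r addr0 mul1r /dR /= /pact.
  rewrite !big_ord_recl big_ord0 /h /= mulr1 mul1r.
  have -> : (inord 1 : 'I_3) = lift ord0 ord0 by apply/val_inj; rewrite /= inordK.
  have -> : (inord 2 : 'I_3) = lift ord0 (lift ord0 ord0) by apply/val_inj; rewrite /= inordK.
  by case: (p.2 (lift ord0 ord0)) => /=; rewrite ?mul1r ?mul0r.
rewrite master !big_ord_recl big_ord0 /h /= mulr1 !big_bool /= /Jstar.
rewrite /bump /= !mulr1 !mulr0 addr0 add0r pol_sum mul1r.
by [].
Qed.

Unset Implicit Arguments.
Section LB.
Variable (E : env) (pi : policy E).
Local Notation S := (st E).
Local Notation A := (act E).

Definition pp n (fs : nat -> S) (fa : nat -> A) : R :=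
  @init E (fs 0) * (\prod_(i < n.+1) pi (fs i) (fa i)) *
  (\prod_(i < n) @trans E (fs i) (fa i) (fs i.+1)).

Lemma path_prob_pp n (p : Defs.path E n) : path_prob pi p = pp n (pst p) (pact p).
Proof. by []. Qed.

Definition agree n (fs : nat -> S) (fa : nat -> A) (gs : nat -> S) (ga : nat -> A) :=
  forall k, (k <= n)%N -> fs k = gs k /\ fa k = ga k.

Lemma agree_sym n fs fa gs ga : agree n fs fa gs ga -> agree n gs ga fs fa.
Proof. by move=> h k kn; have [-> ->] := h k kn. Qed.

Lemma agree_trans n fs fa gs ga hs ha :
  agree n fs fa gs ga -> agree n gs ga hs ha -> agree n fs fa hs ha.
Proof. by move=> h1 h2 k kn; have [-> ->] := h1 k kn; exact: h2. Qed.

Lemma agree_le n m fs fa gs ga : (m <= n)%N -> agree n fs fa gs ga -> agree m fs fa gs ga.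
Proof. by move=> mn h k km; apply: h; exact: leq_trans km mn. Qed.

Lemma pp_agree n fs fa gs ga : agree n fs fa gs ga -> pp n fs fa = pp n gs ga.
Proof.
move=> h; rewrite /pp.
have [-> _] := h 0%N (leq0n n).
congr (_ * _ * _).
  by apply: eq_bigr => i _; have [-> ->] := h i (ltn_ord i).
apply: eq_bigr => i _.
have [-> ->] := h i (ltnW (ltn_ord i)).
by have [-> _] := h i.+1 (ltn_ord i).
Qed.

Arguments pp_agree {n fs fa gs ga}.
Arguments agree_sym {n fs fa gs ga}.
Arguments agree_trans {n fs fa gs ga hs ha}.
Arguments agree_le {n m fs fa gs ga}.

Lemma pp_ge0 n fs fa : 0 <= pp n fs fa.
Proof.
rewrite /pp; apply: mulr_ge0; first apply: mulr_ge0.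
- exact: dist_ge0.
- by apply: prodr_ge0 => i _; exact: dist_ge0.
- by apply: prodr_ge0 => i _; exact: dist_ge0.
Qed.

Lemma pp_S n fs fa : pp n.+1 fs fa =
  pp n fs fa * @trans E (fs n) (fa n) (fs n.+1) * pi (fs n.+1) (fa n.+1).
Proof. rewrite /pp !big_ord_recr /=; ring. Qed.

Lemma pp_le_pp n fs fa : pp n.+1 fs fa <= pp n fs fa.
Proof.
rewrite pp_S -mulrA ler_piMr ?pp_ge0 //.
have h1 : @trans E (fs n) (fa n) (fs n.+1) <= 1.
  have [_ <-] := dval_dist (@trans E (fs n) (fa n)).
  rewrite (bigD1 (fs n.+1)) //= lerDl.
  by apply: sumr_ge0 => i _; exact: dist_ge0.
have h2 : pi (fs n.+1) (fa n.+1) <= 1.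
  have [_ <-] := dval_dist (pi (fs n.+1)).
  rewrite (bigD1 (fa n.+1)) //= lerDl.
  by apply: sumr_ge0 => i _; exact: dist_ge0.
by rewrite -[1]mulr1; apply: ler_pM => //; exact: dist_ge0.
Qed.

Lemma pp_mono m n fs fa : (m <= n)%N -> pp n fs fa <= pp m fs fa.
Proof.
move=> /subnK <-; elim: (n - m)%N => [|d IH]; first by rewrite add0n.
by rewrite addSn; exact: le_trans (pp_le_pp _ _ _) IH.
Qed.

Definition upd (T : Type) (f : nat -> T) (m : nat) (x : T) : nat -> T :=
  fun k => if (k == m)%N then x else f k.
Arguments upd {T}.

Lemma agree_upd n fs fa s a : agree n fs fa (upd fs n.+1 s) (upd fa n.+1 a).
Proof.
move=> k kn; rewrite /upd.
have -> : (k == n.+1)%N = false by apply/negbTE; rewrite neq_ltn ltnS kn.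
by [].
Qed.

Lemma dist_sum1 (T : finType) (d : dist T) : \sum_(x : T) d x = 1.
Proof. by have [_ ->] := dval_dist d. Qed.

Lemma pp_children n fs fa :
  \sum_(s : S) \sum_(a : A) pp n.+1 (upd fs n.+1 s) (upd fa n.+1 a) = pp n fs fa.
Proof.
under eq_bigr => s _.
  under eq_bigr => a _.
    rewrite pp_S -(pp_agree (agree_upd n fs fa s a)) /upd eqxx.
    have -> : (n == n.+1)%N = false by apply/negbTE; rewrite neq_ltn ltnSn.
    over.
  rewrite -mulr_sumr dist_sum1 mulr1.
  over.
by rewrite -mulr_sumr dist_sum1 mulr1.
Qed.

Definition w (c : option {m : nat & Defs.path E m}) n (fs : nat -> S) (fa : nat -> A) : R :=
  match c with
  | None => 0
  | Some (existT m p) =>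
      if (m <= n)%N then
        (if `[< agree m fs fa (pst p) (pact p) >] then pp n fs fa else 0)
      else (if `[< agree n fs fa (pst p) (pact p) >] then pp m (pst p) (pact p) else 0)
  end.

Lemma w_ge0 c n fs fa : 0 <= w c n fs fa.
Proof.
case: c => [[m p]|] //=.
by case: ifP => _; case: asboolP => _ //; exact: pp_ge0.
Qed.

Lemma sum_if_eq (T : finType) (x : T) (F : T -> R) :
  \sum_(y : T) (if y == x then F y else 0) = F x.
Proof. by rewrite -big_mkcond big_pred1_eq. Qed.

Arguments sum_if_eq {T}.

Lemma agree_child n fs fa s a gs ga :
  agree n.+1 (upd fs n.+1 s) (upd fa n.+1 a) gs ga <->
  agree n fs fa gs ga /\ s = gs n.+1 /\ a = ga n.+1.
Proof.
split.
  move=> h; split.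
    move=> k kn; have := h k (leq_trans kn (leqnSn n)).
    by rewrite /upd (negbTE (_ : k != n.+1)) // neq_ltn ltnS kn.
  by have := h n.+1 (leqnn _); rewrite /upd eqxx.
move=> [h [-> ->]] k; rewrite leq_eqVlt ltnS => /orP[/eqP ->|kn].
  by rewrite /upd eqxx.
by rewrite /upd (negbTE (_ : k != n.+1)) ?neq_ltn ?ltnS ?kn //; exact: h.
Qed.

Lemma sum_child_if n fs fa gs ga (X : R) :
  \sum_(s : S) \sum_(a : A)
     (if `[< agree n.+1 (upd fs n.+1 s) (upd fa n.+1 a) gs ga >] then X else 0)
  = if `[< agree n fs fa gs ga >] then X else 0.
Proof.
case: asboolP => h.
  transitivity (\sum_(s : S) \sum_(a : A)
     (if s == gs n.+1 then (if a == ga n.+1 then X else 0) else 0)).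
    apply: eq_bigr => s _; apply: eq_bigr => a _.
    case: asboolP => /agree_child hc.
      by move: hc => [_ [-> ->]]; rewrite !eqxx.
    case: eqP => // es; case: eqP => // ea.
    by exfalso; apply: hc.
  rewrite (eq_bigr (fun s => if s == gs n.+1 then X else 0)); last first.
    move=> s _; case: eqP => _; first by rewrite (sum_if_eq _ (fun _ => X)).
    by rewrite big1.
  by rewrite (sum_if_eq _ (fun _ => X)).
rewrite big1 // => s _; rewrite big1 // => a _.
by case: asboolP => // /agree_child [].
Qed.

Lemma w_children c n fs fa :
  w c n fs fa = \sum_(s : S) \sum_(a : A) w c n.+1 (upd fs n.+1 s) (upd fa n.+1 a).
Proof.
case: c => [[m p]|]; last by rewrite big1 // => s _; rewrite big1.
rewrite /w.
case: (leqP m n) => hmn.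
  have hmn1 : (m <= n.+1)%N by exact: leq_trans hmn (leqnSn n).
  under eq_bigr => s _.
    under eq_bigr => a _.
      rewrite hmn1.
      have -> : `[< agree m (upd fs n.+1 s) (upd fa n.+1 a) (pst p) (pact p) >] =
                `[< agree m fs fa (pst p) (pact p) >].
        apply/asboolP/asboolP => h.
          exact: agree_trans (agree_le hmn (agree_upd n fs fa s a)) h.
        exact: agree_trans (agree_sym (agree_le hmn (agree_upd n fs fa s a))) h.
      over.
    over.
  case: asboolP => _; last by rewrite big1 // => s _; rewrite big1.
  by rewrite pp_children.
rewrite -(sum_child_if n fs fa (pst p) (pact p) (pp m (pst p) (pact p))).
apply: eq_bigr => s _; apply: eq_bigr => a _.
case: (leqP m n.+1) => hm.
  have em : m = n.+1 by apply/eqP; rewrite eqn_leq hm hmn.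
  subst m.
  by case: asboolP => h //; rewrite (pp_agree h).
by [].
Qed.

Definition W (c : nat -> option {m : nat & Defs.path E m}) n fs fa : \bar R :=
  (\sum_(k <oo) (w (c k) n fs fa)%:E)%E.

Lemma W_ge0 c n fs fa : (0 <= W c n fs fa)%E.
Proof. by apply: nneseries_ge0 => k _ _; rewrite lee_fin w_ge0. Qed.

Lemma W_children c n fs fa :
  W c n fs fa = (\sum_(s : S) \sum_(a : A) W c n.+1 (upd fs n.+1 s) (upd fa n.+1 a))%E.
Proof.
rewrite /W.
transitivity (\sum_(k <oo) \sum_(s : S) \sum_(a : A)
   (w (c k) n.+1 (upd fs n.+1 s) (upd fa n.+1 a))%:E)%E.
  apply: eq_eseriesr => k _; rewrite (w_children (c k)) -sumEFin.
  by apply: eq_bigr => s _; rewrite -sumEFin.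
rewrite nneseries_sum; last first.
  by move=> s k _; apply: sume_ge0 => a _; rewrite lee_fin w_ge0.
apply: eq_bigr => s _; rewrite nneseries_sum //.
by move=> a k _; rewrite lee_fin w_ge0.
Qed.

Lemma term_le_series (u : nat -> \bar R) : (forall i, (0 <= u i)%E) ->
  forall k, (u k <= \sum_(i <oo) u i)%E.
Proof.
move=> u0 k.
apply: le_trans (nneseries_lim_ge k.+1 (fun n _ _ => u0 n)).
rewrite big_nat_recr //=; apply: leeDr.
by apply: sume_ge0 => i _; exact: u0.
Qed.

Fixpoint nodes (nx : nat -> (nat -> S) -> (nat -> A) -> S * A) fs0 fa0 (j : nat)
  : (nat -> S) * (nat -> A) :=
  match j with
  | 0 => (fs0, fa0)
  | j'.+1 => let nd := nodes nx fs0 fa0 j' in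
      (upd nd.1 j'.+1 (nx j' nd.1 nd.2).1, upd nd.2 j'.+1 (nx j' nd.1 nd.2).2)
  end.

Lemma agree_refl n fs fa : agree n fs fa fs fa.
Proof. by []. Qed.

Lemma nodes_agree nx fs0 fa0 j d :
  agree j (nodes nx fs0 fa0 j).1 (nodes nx fs0 fa0 j).2
          (nodes nx fs0 fa0 (j + d)).1 (nodes nx fs0 fa0 (j + d)).2.
Proof.
elim: d => [|d IH]; first by rewrite addn0.
rewrite addnS /=.
apply: agree_trans IH _.
exact: agree_le (leq_addr d j) (agree_upd _ _ _ _ _).
Qed.

Lemma nodes_xi nx fs0 fa0 j :
  agree j (nodes nx fs0 fa0 j).1 (nodes nx fs0 fa0 j).2
    (fun k => (nodes nx fs0 fa0 k).1 k) (fun k => (nodes nx fs0 fa0 k).2 k).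
Proof.
move=> k kj.
have := nodes_agree nx fs0 fa0 k (j - k) k (leqnn k).
by rewrite subnKC // => -[-> ->].
Qed.

Lemma bad_node_lb (c : nat -> option {m : nat & Defs.path E m})
  (V : nat -> (nat -> S) -> (nat -> A) -> R)
  (HV0 : forall n fs fa gs ga, agree n fs fa gs ga -> V n fs fa = V n gs ga)
  (HV1 : forall n fs fa,
     V n fs fa <= \sum_(s : S) \sum_(a : A) V n.+1 (upd fs n.+1 s) (upd fa n.+1 a))
  (HV2 : forall n fs fa, V n fs fa <= pp n fs fa)
  (HV3 : forall xi : traj E, (forall n, 0 < V n (tst xi) (tact xi)) ->
          exists k, ocyl (c k) xi)
  fs0 fa0 : ((V 0 fs0 fa0)%:E <= W c 0 fs0 fa0)%E.
Proof.
rewrite leNgt; apply/negP => bad0.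
pose bad n fs fa := (W c n fs fa < (V n fs fa)%:E)%E.
have child n fs fa : bad n fs fa ->
    exists x : S * A, bad n.+1 (upd fs n.+1 x.1) (upd fa n.+1 x.2).
  move=> hb; case: (pselect (exists x : S * A, bad n.+1 (upd fs n.+1 x.1) (upd fa n.+1 x.2))) => // hne.
  exfalso; move: hb; rewrite /bad ltNge => /negP; apply.
  rewrite W_children.
  apply: (@le_trans _ _ (\sum_(s : S) \sum_(a : A) (V n.+1 (upd fs n.+1 s) (upd fa n.+1 a))%:E)%E).
    rewrite (eq_bigr (fun s => (\sum_(a : A) V n.+1 (upd fs n.+1 s) (upd fa n.+1 a))%:E)); last first.
      by move=> s _; rewrite sumEFin.
    by rewrite sumEFin lee_fin HV1.
  apply: lee_sum => s _; apply: lee_sum => a _.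
  rewrite leNgt; apply/negP => h; apply: hne; by exists (s, a).
pose nx n (fs : nat -> S) (fa : nat -> A) : S * A :=
  match pselect (exists x : S * A, bad n.+1 (upd fs n.+1 x.1) (upd fa n.+1 x.2)) with
  | left H => proj1_sig (cid H)
  | right _ => (fs0 0%N, fa0 0%N)
  end.
have allbad j : bad j (nodes nx fs0 fa0 j).1 (nodes nx fs0 fa0 j).2.
  elim: j => [|j IH] //=.
  rewrite /nx; case: pselect => [H|H].
    exact: (proj2_sig (cid H)).
  by exfalso; apply: H; apply: child.
pose xi := Traj (fun k => (nodes nx fs0 fa0 k).1 k) (fun k => (nodes nx fs0 fa0 k).2 k).
have Vpos n : 0 < V n (tst xi) (tact xi).
  rewrite -(HV0 _ _ _ _ _ (nodes_xi nx fs0 fa0 n)) -lte_fin.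
  exact: le_lt_trans (W_ge0 _ _ _ _) (allbad n).
have [k hk] := HV3 xi Vpos.
move: hk; case ck: (c k) => [[m p]|] //= hcyl.
have hag : agree m (nodes nx fs0 fa0 m).1 (nodes nx fs0 fa0 m).2 (pst p) (pact p).
  apply: agree_trans (nodes_xi nx fs0 fa0 m) _.
  by move=> i im; exact: hcyl.
have hw : w (c k) m (nodes nx fs0 fa0 m).1 (nodes nx fs0 fa0 m).2 =
          pp m (nodes nx fs0 fa0 m).1 (nodes nx fs0 fa0 m).2.
  by rewrite ck /= leqnn; case: asboolP.
have := allbad m; rewrite /bad ltNge => /negP; apply.
have T := term_le_series (fun k => (w (c k) m (nodes nx fs0 fa0 m).1 (nodes nx fs0 fa0 m).2)%:E)
  (fun i => w_ge0 _ _ _ _ : (0 <= _%:E)%E) k.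
apply: le_trans _ T.
by rewrite /= hw lee_fin HV2.
Qed.

Lemma pp_child n fs fa s a :
  pp n.+1 (upd fs n.+1 s) (upd fa n.+1 a) = pp n fs fa * @trans E (fs n) (fa n) s * pi s a.
Proof.
rewrite pp_S -(pp_agree (agree_upd n fs fa s a)) /upd eqxx.
have -> : (n == n.+1)%N = false by apply/negbTE; rewrite neq_ltn ltnSn.
by [].
Qed.

Lemma sum_root_if gs ga (X : R) :
  \sum_(s : S) \sum_(a : A)
     (if `[< agree 0 (fun _ => s) (fun _ => a) gs ga >] then X else 0) = X.
Proof.
transitivity (\sum_(s : S) \sum_(a : A)
     (if s == gs 0%N then (if a == ga 0%N then X else 0) else 0)).
  apply: eq_bigr => s _; apply: eq_bigr => a _.
  case: asboolP => h.
    by have [-> ->] := h 0%N (leqnn 0); rewrite !eqxx.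
  case: eqP => // es; case: eqP => // ea; exfalso; apply: h => k.
  by rewrite leqn0 => /eqP ->.
rewrite (eq_bigr (fun s => if s == gs 0%N then X else 0)); last first.
  move=> s _; case: eqP => _; first by rewrite (sum_if_eq _ (fun _ => X)).
  by rewrite big1.
by rewrite (sum_if_eq _ (fun _ => X)).
Qed.

Lemma w_root c : \sum_(s : S) \sum_(a : A) w c 0 (fun _ => s) (fun _ => a) = ocyl_prob pi c.
Proof.
case: c => [[m p]|]; last by rewrite big1 // => s _; rewrite big1.
change (\sum_(s : S) \sum_(a : A) w (Some (existT _ m p)) 0 (fun _ => s) (fun _ => a) = pp m (pst p) (pact p)).
rewrite -(sum_root_if (pst p) (pact p) (pp m (pst p) (pact p))).
apply: eq_bigr => s _; apply: eq_bigr => a _.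
rewrite /w.
case: m p => [|m] p /=; last by [].
by case: asboolP => // h; rewrite (pp_agree h).
Qed.

Lemma traj_prob_lb (B : set (traj E)) (V : nat -> (nat -> S) -> (nat -> A) -> R)
  (HV0 : forall n fs fa gs ga, agree n fs fa gs ga -> V n fs fa = V n gs ga)
  (HV1 : forall n fs fa,
     V n fs fa <= \sum_(s : S) \sum_(a : A) V n.+1 (upd fs n.+1 s) (upd fa n.+1 a))
  (HV2 : forall n fs fa, V n fs fa <= pp n fs fa)
  (HV3 : forall xi : traj E, (forall n, 0 < V n (tst xi) (tact xi)) -> B xi) :
  ((\sum_(s : S) \sum_(a : A) V 0 (fun _ => s) (fun _ => a))%:E <= traj_prob pi B)%E.
Proof.
rewrite /traj_prob; apply: le_ereal_inf_tmp => _ [c hc <-].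
apply: (@le_trans _ _ (\sum_(s : S) \sum_(a : A) W c 0 (fun _ => s) (fun _ => a))%E).
  rewrite -sumEFin; apply: lee_sum => s _; rewrite -sumEFin; apply: lee_sum => a _.
  apply: bad_node_lb => // xi hxi.
  by have [k _ hk] := hc xi (HV3 xi hxi); exists k.
rewrite /W.
rewrite (eq_bigr (fun s => \sum_(k <oo) \sum_(a : A) (w (c k) 0 (fun _ => s) (fun _ => a))%:E)%E); last first.
  by move=> s _; rewrite nneseries_sum // => a k _; rewrite lee_fin w_ge0.
rewrite -nneseries_sum; last first.
  by move=> s k _; apply: sume_ge0 => a _; rewrite lee_fin w_ge0.
rewrite le_eqVlt; apply/orP; left; apply/eqP.
apply: eq_eseriesr => k _.
rewrite (eq_bigr (fun s => (\sum_(a : A) w (c k) 0 (fun _ => s) (fun _ => a))%:E)); last first.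
  by move=> s _; rewrite sumEFin.
by rewrite sumEFin w_root.
Qed.

End LB.

Arguments upd {T}.
Definition phi0 : ltl E0 :=
  LAnd (LNext (LAtom (true : st E0) (true : act E0) (true : st E0)))
       (LNext (LNext (LAtom (true : st E0) (false : act E0) (true : st E0)))).

Definition e3 (fs : nat -> st E0) (fa : nat -> act E0) : bool :=
  [&& (fs 1%N : bool), (fa 1%N : bool), (fs 2%N : bool), ~~ (fa 2%N : bool) & (fs 3%N : bool)].

Definition V0 (pi : policy E0) (n : nat) (fs : nat -> st E0) (fa : nat -> act E0) : R :=
  match n with
  | 0 => pp E0 pi 0 fs fa * (pi true true * pi true false)
  | 1 => ((fs 1%N : bool) && (fa 1%N : bool))%:R * pp E0 pi 1 fs fa * pi true false
  | 2 => [&& (fs 1%N : bool), (fa 1%N : bool), (fs 2%N : bool) & ~~ (fa 2%N : bool)]%:R * pp E0 pi 2 fs fa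
  | _ => (e3 fs fa)%:R * pp E0 pi n fs fa
  end.

Lemma pol_le1 (pi : policy E0) s a : pi s a <= 1.
Proof.
have := pol_sum pi s; have := dist_ge0 (pi s) true; have := dist_ge0 (pi s) false.
by case: a; lra.
Qed.

Lemma ind_le (b : bool) (x : R) : 0 <= x -> b%:R * x <= x.
Proof. by case: b => h; rewrite ?mul1r ?mul0r. Qed.

Lemma transE0 s a s' : @trans E0 s a s' = ((s' : bool) == true)%:R.
Proof. by rewrite /= ffunE. Qed.

Lemma V0_HV1 pi n fs fa :
  V0 pi n fs fa <= \sum_(s : st E0) \sum_(a : act E0) V0 pi n.+1 (upd fs n.+1 s) (upd fa n.+1 a).
Proof.
rewrite le_eqVlt; apply/orP; left; apply/eqP.
case: n => [|[|[|n]]].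
- rewrite /V0 /=.
  under eq_bigr => s _ do under eq_bigr => a _ do rewrite pp_child transE0.
  rewrite !big_bool /= /upd /=; ring.
- rewrite /V0 /=.
  under eq_bigr => s _ do under eq_bigr => a _ do rewrite pp_child transE0.
  rewrite !big_bool /= /upd /=.
  case: (fs 1%N : bool); case: (fa 1%N : bool) => /=; ring.
- rewrite /V0 /e3 /=.
  under eq_bigr => s _ do under eq_bigr => a _ do rewrite pp_child transE0.
  rewrite !big_bool /= /upd /=.
  have := pol_sum pi true => h.
  have -> : pi true false = 1 - pi true true by lra.
  case: (fs 1%N : bool); case: (fa 1%N : bool); case: (fs 2%N : bool); case: (fa 2%N : bool) => /=; ring.
- have E1 s a : V0 pi n.+4 (upd fs n.+4 s) (upd fa n.+4 a) =
      (e3 fs fa)%:R * pp E0 pi n.+4 (upd fs n.+4 s) (upd fa n.+4 a) by [].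
  under eq_bigr => s _ do under eq_bigr => a _ do rewrite E1.
  change (V0 pi n.+3 fs fa) with ((e3 fs fa)%:R * pp E0 pi n.+3 fs fa).
  rewrite -(pp_children E0 pi n.+3 fs fa) mulr_sumr; apply: eq_bigr => s _.
  by rewrite mulr_sumr.
Qed.

Lemma V0_HV0 pi n fs fa gs ga : agree E0 n fs fa gs ga -> V0 pi n fs fa = V0 pi n gs ga.
Proof.
move=> h; have hp := @pp_agree E0 pi _ _ _ _ _ h.
case: n h hp => [|[|[|n]]] h hp; rewrite /V0 hp //.
- by have [-> ->] := h 1%N (leqnn 1).
- by have [-> ->] := h 1%N isT; have [-> ->] := h 2%N isT.
- rewrite /e3.
  by have [-> ->] := h 1%N isT; have [-> ->] := h 2%N isT; have [-> _] := h 3%N isT.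
Qed.

Lemma V0_HV2 pi n fs fa : V0 pi n fs fa <= pp E0 pi n fs fa.
Proof.
have hp := pp_ge0 E0 pi n fs fa.
have q1 := pol_le1 pi true true; have q2 := pol_le1 pi true false.
have q1' := dist_ge0 (pi true) true; have q2' := dist_ge0 (pi true) false.
case: n hp => [|[|[|n]]] hp; rewrite /V0.
- by apply: ler_piMr => //; exact: mulr_ile1.
- apply: le_trans (ind_le _ _ hp).
  by apply: ler_piMr => //; rewrite mulr_ge0 // ler0n.
- exact: ind_le.
- exact: ind_le.
Qed.

Lemma V0_HV3 pi (xi : traj E0) : (forall n, 0 < V0 pi n (tst xi) (tact xi)) ->
  ltl_holds phi0 xi 0.
Proof.
move=> /(_ 3%N); rewrite /V0.
case he: (e3 (tst xi) (tact xi)); last by rewrite mul0r ltxx.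
move: he => /and5P [h1 h2 h3 h4 h5] _ /=.
by move/negbTE: h4 => h4; do !split; apply/eqP; rewrite ?h4 ?eqxx //= ?(eqb_id _).
Qed.

Lemma V0_root pi :
  \sum_(s : st E0) \sum_(a : act E0) V0 pi 0 (fun _ => s) (fun _ => a) = Jstar pi.
Proof.
rewrite /V0 /pp /Jstar.
under eq_bigr => s _ do under eq_bigr => a _ do rewrite big_ord1 big_ord0 mulr1.
rewrite !big_bool /= !ffunE /=.
have := pol_sum pi false => h.
rewrite !mul0r !add0r !mul1r -mulrDl h mul1r.
by [].
Qed.

Definition P4 (s0 a0 : bool) : Defs.path E0 2 :=
  ([ffun i : 'I_3 => if val i == 0%N then s0 else true],
   [ffun i : 'I_3 => if val i == 0%N then a0 else (val i == 1%N)]).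

Definition c4 (k : nat) : option {m : nat & Defs.path E0 m} :=
  match k with
  | 0 => Some (existT _ 2%N (P4 false false))
  | 1 => Some (existT _ 2%N (P4 false true))
  | 2 => Some (existT _ 2%N (P4 true false))
  | 3 => Some (existT _ 2%N (P4 true true))
  | _ => None
  end.

Lemma P4_prob pi s0 a0 :
  path_prob pi (P4 s0 a0) = (~~ s0)%:R * pi false a0 * (pi true true * pi true false).
Proof.
rewrite pp_E0 !big_ord_recl big_ord0 /= !ffunE /= mulr1.
by case: s0 => /=; rewrite ?mul0r ?mul1r //; ring.
Qed.

Lemma LTL_cover :
  [set xi : traj E0 | ltl_holds phi0 xi 0] `<=` \bigcup_k ocyl (c4 k).
Proof.
move=> xi /= [[h1 [h2 h3]] [_ [h4 h5]]].
have key : forall s0 a0, tst xi 0 = s0 -> tact xi 0 = a0 -> cyl (P4 s0 a0) xi.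
  move=> s0 a0 e1 e2 k; rewrite leq_eqVlt ltnS leq_eqVlt ltnS leqn0.
  rewrite /pst /pact !ffunE.
  have v m : (m < 3)%N -> \val (inord m : 'I_3) = m by move=> hm; exact: inordK.
  by case/or3P => /eqP ->; rewrite v //=.
case E1 : (tst xi 0 : bool); case E2 : (tact xi 0 : bool).
- by exists 3%N => //; exact: key.
- by exists 2%N => //; exact: key.
- by exists 1%N => //; exact: key.
- by exists 0%N => //; exact: key.
Qed.



Lemma path_prob_ge0 (E : env) (pi : policy E) n (p : Defs.path E n) : 0 <= path_prob pi p.
Proof. exact: pp_ge0. Qed.

Lemma c4_sum pi : (\sum_(k <oo) (ocyl_prob pi (c4 k))%:E)%E = (Jstar pi)%:E.
Proof.
have h0 : forall k, (0 <= k)%N -> (0 <= (ocyl_prob pi (c4 k))%:E)%E.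
  move=> k _; rewrite lee_fin.
  by case: k => [|[|[|[|k]]]] //=; exact: path_prob_ge0.
rewrite (@nneseries_split _ _ 0 4 h0) [X in (_ + X)%E]eseries0 ?adde0; last first.
  by case=> [|[|[|[|k]]]].
rewrite sumEFin; congr EFin.
rewrite unlock /= !P4_prob /Jstar /=.
have := pol_sum pi false => h.
rewrite !mul0r !mul1r !add0r addr0 addrC -mulrDl h mul1r.
by [].
Qed.

Lemma J_LTL_E0 pi : J_LTL phi0 pi = Jstar pi.
Proof.
have lb := traj_prob_lb E0 pi [set xi | ltl_holds phi0 xi 0] (V0 pi)
  (V0_HV0 pi) (V0_HV1 pi) (V0_HV2 pi) (V0_HV3 pi).
rewrite V0_root in lb.
have ub : (traj_prob pi [set xi | ltl_holds phi0 xi 0] <= (Jstar pi)%:E)%E.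
  apply: ereal_inf_lbound; exists c4; first exact: LTL_cover.
  exact: c4_sum.
rewrite /J_LTL (_ : traj_prob _ _ = (Jstar pi)%:E) //.
by apply/le_anti/andP.
Qed.

Theorem mainTheorem11 :
  exists (E : env) (rel : policy E -> policy E -> Prop),
    total_preorder rel /\
    in_Ord_RM rel /\ in_Ord_ONMR rel /\ in_Ord_LTL rel /\
    ~ in_Ord_MR rel /\ ~ in_Ord_RRL rel.
Proof.
exists E0, rel0; split; first exact: rel0_tp.
split.
  exists U0, u0, dU, dR, 2^-1; split; first exact: half_ok.
  move=> p1 p2; rewrite /rel0 !J_RM_E0 ler_pM2l //.
split.
  exists Rw_on, f_on, 2^-1; split; first exact: half_ok.
  by move=> p1 p2; rewrite !J_ONMR_E0.
split.
  by exists phi0 => p1 p2; rewrite !J_LTL_E0.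
by split; [exact: not_MR | exact: not_RRL].
Qed.
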